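(* Let $\mathcal{S}$ be a set of $q^3+1$ mutually opposite lines of a finite split Cayley hexagon $\mathsf{H}(q)$. Then every line of $\mathsf{H}(q)$ intersects some line of $\mathcal{S}$.
   Context: $\mathsf{H}(q)$ is the split Cayley hexagon, a generalised hexagon of order $(q,q)$, having $(q+1)(q^4+q^2+1)$ lines. Two lines are opposite if they are at distance $6$ in the incidence graph. *)

(* Defs.v *)
(* Concrete model of the split Cayley hexagon H(q), q = #|F|,
   following Tits / Van Maldeghem ("Generalized Polygons", 2.4.13):
   points  = all points of the parabolic quadric Q(6,q) : X0X4+X1X5+X2X6 = X3^2
             in PG(6,q);
   lines   = the lines of Q(6,q) whose Grassmann coordinates satisfy
             p12=p34, p54=p32, p20=p35, p65=p30, p01=p36, p46=p31.
   A subspace of F^7 is represented canonically by its row-space closure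
   <<L>>%MS : 'M[F]_7, so that distinct matrices = distinct subspaces. *)
From HB Require Import structures.
From mathcomp Require Import all_boot all_order all_algebra.
Set Implicit Arguments. Unset Strict Implicit. Unset Printing Implicit Defensive.
Import Order.TTheory GRing.Theory.
Local Open Scope ring_scope.

Section Hexagon.
Variable F : finFieldType.

Definition xc (u : 'rV[F]_7) (i : nat) : F := u ord0 (inord i).

Definition Qform (u : 'rV[F]_7) : F :=
  xc u 0 * xc u 4 + xc u 1 * xc u 5 + xc u 2 * xc u 6 - xc u 3 ^+ 2.

Definition pg (u v : 'rV[F]_7) (i j : nat) : F := xc u i * xc v j - xc u j * xc v i.

Definition grass_ok (u v : 'rV[F]_7) : bool :=
  [&& pg u v 1 2 == pg u v 3 4, pg u v 5 4 == pg u v 3 2,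
      pg u v 2 0 == pg u v 3 5, pg u v 6 5 == pg u v 3 0,
      pg u v 0 1 == pg u v 3 6 & pg u v 4 6 == pg u v 3 1].

(* L (in canonical form) is a line of H(q): a 2-dimensional totally singular
   subspace of Q(6,q) whose Grassmann coordinates satisfy Tits' equations
   (these are homogeneous, so checking them for all pairs u, v in L is the
   same as checking them on a basis). *)
Definition is_hline (L : 'M[F]_7) : bool :=
  [&& (<<L>>%MS == L), \rank L == 2%N,
      [forall u : 'rV[F]_7, (u <= L)%MS ==> (Qform u == 0)] &
      [forall u : 'rV[F]_7, forall v : 'rV[F]_7,
          ((u <= L)%MS && (v <= L)%MS) ==> grass_ok u v]].

Definition meets (L M : 'M[F]_7) : bool := (L :&: M)%MS != 0.

(* lines_within k L M : the lines L, M are at distance <= 2k in the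
   point-line incidence graph of H(q). *)
Fixpoint lines_within (k : nat) (L M : 'M[F]_7) : bool :=
  if k is k'.+1 then
    (L == M) || [exists N : 'M[F]_7, [&& is_hline N, meets L N & lines_within k' N M]]
  else L == M.

Definition opposite (L M : 'M[F]_7) : bool :=
  lines_within 3 L M && ~~ lines_within 2 L M.

End Hexagon.

(* Main.v *)
Require Import Defs.
From HB Require Import structures.
From mathcomp Require Import all_boot all_order all_algebra.
From mathcomp Require Import ring zify.
Set Implicit Arguments. Unset Strict Implicit. Unset Printing Implicit Defensive.
Import Order.TTheory GRing.Theory.
Local Open Scope ring_scope.
Section S.
Variable F : finFieldType.
Implicit Types u v w : 'rV[F]_7.
Definition mk7 (a0 a1 a2 a3 a4 a5 a6 : F) : 'rV[F]_7 :=
  \row_(i < 7) nth 0 [:: a0; a1; a2; a3; a4; a5; a6] i.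
Lemma xcmk a0 a1 a2 a3 a4 a5 a6 i : (i < 7)%N ->
  xc (mk7 a0 a1 a2 a3 a4 a5 a6) i = nth 0 [:: a0; a1; a2; a3; a4; a5; a6] i.
Proof. by move=> h; rewrite /xc !mxE inordK. Qed.
Lemma xc_ext u v : (forall i, (i < 7)%N -> xc u i = xc v i) -> u = v.
Proof. move=> H; apply/rowP => i; have := H i (ltn_ord i); rewrite /xc inord_val.
by []. Qed.

Definition Bf u v : F := xc u 0 * xc v 4 + xc u 4 * xc v 0 + xc u 1 * xc v 5
  + xc u 5 * xc v 1 + xc u 2 * xc v 6 + xc u 6 * xc v 2 - 2 * xc u 3 * xc v 3.
Definition Wcond u v := grass_ok u v && (Bf u v == 0).

Definition p3 u (a b c : F) := (xc u 3 * a - xc u 6 * b + xc u 5 * c) / xc u 0.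
Definition p2 u (a b c : F) := (xc u 2 * a - xc u 3 * b + xc u 5 * p3 u a b c) / xc u 0.
Definition p1 u (a b c : F) := (xc u 1 * a + xc u 3 * c - xc u 6 * p3 u a b c) / xc u 0.
Definition p4 u (a b c : F) := - (xc u 4 * a + xc u 1 * b + xc u 5 * p1 u a b c
   + xc u 2 * c + xc u 6 * p2 u a b c - 2 * xc u 3 * p3 u a b c) / xc u 0.
Definition param u a b c := mk7 a (p1 u a b c) (p2 u a b c) (p3 u a b c) (p4 u a b c) b c.

Ltac lin h s := match type of h with ?C = ?D =>
  apply/eqP; rewrite -subr_eq0; apply/eqP;
  transitivity (s * (C - D)); [by field | by rewrite h subrr mulr0] end.

Lemma param_det u v : xc u 0 != 0 -> Wcond u v ->
  v = param u (xc v 0) (xc v 5) (xc v 6).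
Proof.
move=> h0 /andP[/and5P[_ _ E3 E4 /andP[E5 _]] /eqP EB].
move/eqP: E3; move/eqP: E4; move/eqP: E5; rewrite /pg => E5 E4 E3.
have h3 : xc v 3 = p3 u (xc v 0) (xc v 5) (xc v 6).
  rewrite /p3; lin E4 (1 / xc u 0).
have h2 : xc v 2 = p2 u (xc v 0) (xc v 5) (xc v 6).
  rewrite /p2 -h3; lin E3 (-1 / xc u 0).
have h1 : xc v 1 = p1 u (xc v 0) (xc v 5) (xc v 6).
  rewrite /p1 -h3; lin E5 (1 / xc u 0).
have h4 : xc v 4 = p4 u (xc v 0) (xc v 5) (xc v 6).
  rewrite /p4 -h3 -h2 -h1; move: EB; rewrite /Bf => EB; lin EB (1 / xc u 0).
apply: xc_ext => -[|[|[|[|[|[|[|i]]]]]]] // _; rewrite xcmk //=.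
Qed.

Lemma Qu4 u : Qform u = 0 -> xc u 0 != 0 ->
  xc u 4 = (xc u 3 ^+ 2 - xc u 1 * xc u 5 - xc u 2 * xc u 6) / xc u 0.
Proof. rewrite /Qform => hq h0. apply/eqP; rewrite -subr_eq0; apply/eqP.
transitivity ((xc u 0 * xc u 4 + xc u 1 * xc u 5 + xc u 2 * xc u 6 - xc u 3 ^+ 2) / xc u 0).
  by field. by rewrite hq mul0r. Qed.

Lemma param_ok u a b c : Qform u = 0 -> xc u 0 != 0 ->
  Wcond u (param u a b c) /\ Qform (param u a b c) = 0.
Proof.
move=> hq h0; have h4 := Qu4 hq h0.
rewrite /Wcond /grass_ok /pg /Bf /Qform /param !xcmk //= /p4 /p1 /p2 /p3 h4.
split; [repeat (apply/andP; split); apply/eqP; by field | by field].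
Qed.

Definition sg v := mk7 (xc v 2) (xc v 0) (xc v 1) (xc v 3) (xc v 6) (xc v 4) (xc v 5).
Definition tg v := mk7 (xc v 4) (xc v 5) (xc v 6) (- xc v 3) (xc v 0) (xc v 1) (xc v 2).

Lemma sgK v : sg (sg (sg v)) = v.
Proof. apply: xc_ext => -[|[|[|[|[|[|[|i]]]]]]] // _; by rewrite /sg !xcmk. Qed.
Lemma tgK v : tg (tg v) = v.
Proof. apply: xc_ext => -[|[|[|[|[|[|[|i]]]]]]] // _; rewrite /tg !xcmk //=.
by rewrite opprK. Qed.

Lemma Q_sg v : Qform (sg v) = Qform v.
Proof. rewrite /Qform /sg !xcmk //=; ring. Qed.
Lemma Q_tg v : Qform (tg v) = Qform v.
Proof. rewrite /Qform /tg !xcmk //=; ring. Qed.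

Ltac lin0 h s := match type of h with ?C = ?D =>
  rewrite -subr_eq0; apply/eqP;
  transitivity (s * (C - D)); [by ring | by rewrite h subrr mulr0] end.

Lemma W_sg u v : Wcond u v -> Wcond (sg u) (sg v).
Proof.
move=> /andP[/and5P[E1 E2 E3 E4 /andP[E5 E6]] /eqP EB].
move/eqP: E1; move/eqP: E2; move/eqP: E3; move/eqP: E4; move/eqP: E5; move/eqP: E6.
rewrite /pg => E6 E5 E4 E3 E2 E1; move: EB; rewrite /Bf => EB.
rewrite /Wcond /grass_ok /pg /Bf /sg !xcmk //=.
repeat (apply/andP; split); [lin0 E5 (1:F)|lin0 E6 (1:F)|lin0 E1 (1:F)|lin0 E2 (1:F)|lin0 E3 (1:F)|lin0 E4 (1:F)|lin0 EB (1:F)].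
Qed.

Lemma W_tg u v : Wcond u v -> Wcond (tg u) (tg v).
Proof.
move=> /andP[/and5P[E1 E2 E3 E4 /andP[E5 E6]] /eqP EB].
move/eqP: E1; move/eqP: E2; move/eqP: E3; move/eqP: E4; move/eqP: E5; move/eqP: E6.
rewrite /pg => E6 E5 E4 E3 E2 E1; move: EB; rewrite /Bf => EB.
rewrite /Wcond /grass_ok /pg /Bf /tg !xcmk //=.
repeat (apply/andP; split); [lin0 E4 (-1:F)|lin0 E5 (-1:F)|lin0 E6 (-1:F)|lin0 E1 (-1:F)|lin0 E2 (-1:F)|lin0 E3 (-1:F)|lin0 EB (1:F)].
Qed.

Definition Pgood u := #|[set v | Wcond u v]| = (#|F| ^ 3)%N /\
  forall v, Wcond u v -> Qform v = 0.

Lemma transport (g h : 'rV[F]_7 -> 'rV[F]_7) u : cancel g h -> cancel h g ->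
  (forall x y, Wcond x y -> Wcond (g x) (g y)) ->
  (forall x y, Wcond x y -> Wcond (h x) (h y)) ->
  (forall x, Qform (g x) = Qform x) -> Pgood (g u) -> Pgood u.
Proof.
move=> gK hK Wg Wh Qg [c q]; split.
  rewrite -c -(card_imset _ (can_inj gK)); apply: eq_card => w.
  rewrite [in RHS]inE; apply/imsetP/idP.
    by case=> v; rewrite inE => Hv ->; exact: Wg.
  move=> Hw; exists (h w); last by rewrite hK.
  by rewrite inE; have := Wh _ _ Hw; rewrite gK.
by move=> v Hv; rewrite -Qg; apply: q; exact: Wg.
Qed.

Lemma case0 u : Qform u = 0 -> xc u 0 != 0 -> Pgood u.
Proof.
move=> hq h0; split; last first.
  by move=> v Hv; rewrite (param_det h0 Hv); case: (param_ok (xc v 0) (xc v 5) (xc v 6) hq h0).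
have -> : [set v | Wcond u v] =
   (fun t : F * F * F => param u t.1.1 t.1.2 t.2) @: setT.
  apply/setP => w; rewrite inE; apply/idP/imsetP.
    move=> Hw; exists (xc w 0, xc w 5, xc w 6); first by rewrite inE.
    exact: param_det.
  by case=> t _ ->; case: (param_ok t.1.1 t.1.2 t.2 hq h0).
rewrite card_imset; last first.
  move=> [[a b] c] [[a' b'] c'] /= E.
  have e0 := congr1 (fun x => xc x 0) E; have e5 := congr1 (fun x => xc x 5) E.
  have e6 := congr1 (fun x => xc x 6) E.
  move: e0 e5 e6; rewrite /param /= !xcmk //= => -> -> ->; done.
by rewrite cardsT !card_prod !expnS expn0 muln1 mulnA.
Qed.

Lemma P_sg u : Pgood (sg u) -> Pgood u.
Proof.
apply: (@transport sg (fun x => sg (sg x))) => //.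
- by move=> x; rewrite sgK.
- by move=> x; rewrite sgK.
- exact: W_sg.
- by move=> x y H; apply: W_sg; apply: W_sg.
- exact: Q_sg.
Qed.
Lemma P_tg u : Pgood (tg u) -> Pgood u.
Proof.
apply: (@transport tg tg) => //.
- by move=> x; rewrite tgK.
- by move=> x; rewrite tgK.
- exact: W_tg.
- exact: W_tg.
- exact: Q_tg.
Qed.

Lemma Pall u : Qform u = 0 -> u != 0 -> Pgood u.
Proof.
move=> hq nz.
have hs : Qform (sg u) = 0 by rewrite Q_sg.
have hss : Qform (sg (sg u)) = 0 by rewrite !Q_sg.
have ht : Qform (tg u) = 0 by rewrite Q_tg.
have hst : Qform (sg (tg u)) = 0 by rewrite Q_sg.
have hsst : Qform (sg (sg (tg u))) = 0 by rewrite !Q_sg.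
have [z0|n0] := eqVneq (xc u 0) 0; last exact: case0.
have [z1|n1] := eqVneq (xc u 1) 0; last first.
  by apply: P_sg; apply: P_sg; apply: case0 => //; rewrite /sg !xcmk.
have [z2|n2] := eqVneq (xc u 2) 0; last first.
  by apply: P_sg; apply: case0 => //; rewrite /sg !xcmk.
have [z4|n4] := eqVneq (xc u 4) 0; last first.
  by apply: P_tg; apply: case0 => //; rewrite /tg !xcmk.
have [z5|n5] := eqVneq (xc u 5) 0; last first.
  by apply: P_tg; apply: P_sg; apply: P_sg; apply: case0 => //; rewrite /tg /sg !xcmk.
have [z6|n6] := eqVneq (xc u 6) 0; last first.
  by apply: P_tg; apply: P_sg; apply: case0 => //; rewrite /tg /sg !xcmk.
exfalso; move/eqP: nz; apply.
have z3 : xc u 3 = 0.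
  move: hq; rewrite /Qform z0 z1 z2 !mul0r !add0r => /eqP.
  by rewrite oppr_eq0 expf_eq0 /= => /eqP.
apply: xc_ext => -[|[|[|[|[|[|[|i]]]]]]] // _; by rewrite /xc mxE.
Qed.
End S.

Section S2.
Variable F : finFieldType.
Implicit Types u v w x y : 'rV[F]_7.
Implicit Types L N M : 'M[F]_7.
Local Notation q := #|F|.

Lemma card_sub m (A : 'M[F]_(m, 7)) : #|[set v : 'rV[F]_7 | (v <= A)%MS]| = (q ^ \rank A)%N.
Proof.
rewrite -[\rank A]mul1n -card_mx.
have injA: injective (mulmxr (row_base A)).
  have /row_freeP[A' A'K] := row_base_free A.
  by move=> ?; apply: can_inj (mulmxr A') _ => u; rewrite /= -mulmxA A'K mulmx1.
rewrite -(card_image (injA _)); apply: eq_card => v.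
by rewrite inE -(eq_row_base A) (sameP submxP codomP).
Qed.

Lemma xcD u v i : xc (u + v) i = xc u i + xc v i. Proof. by rewrite /xc mxE. Qed.
Lemma xcZ a u i : xc (a *: u) i = a * xc u i. Proof. by rewrite /xc mxE. Qed.

Lemma BfE u v : Bf u v = Qform (u + v) - Qform u - Qform v.
Proof. rewrite /Bf /Qform !xcD; ring. Qed.

Lemma hline_Q L u : is_hline L -> (u <= L)%MS -> Qform u = 0.
Proof. by case/and4P => _ _ /forallP /(_ u) /implyP H _ /H /eqP. Qed.
Lemma hline_rank L : is_hline L -> \rank L = 2%N.
Proof. by case/and4P => _ /eqP. Qed.
Lemma hline_gen L : is_hline L -> <<L>>%MS = L.
Proof. by case/and4P => /eqP. Qed.

Lemma line_W L u v : is_hline L -> (u <= L)%MS -> (v <= L)%MS -> Wcond u v.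
Proof.
move=> hL uL vL; apply/andP; split.
  by case/and4P: hL => _ _ _ /forallP /(_ u) /forallP /(_ v) /implyP; apply; rewrite uL.
by rewrite BfE !(hline_Q hL) ?addmx_sub // !subr0.
Qed.

Lemma dec_span x u v : (x <= u + v)%MS -> exists a b, x = a *: u + b *: v.
Proof.
case/sub_addsmxP => w ->.
have /sub_rVP[a ->] : (w.1 *m u <= u)%MS by apply: submxMl.
have /sub_rVP[b ->] : (w.2 *m v <= v)%MS by apply: submxMl.
by exists a, b.
Qed.

Lemma rank_span u v : u != 0 -> ~~ (v <= u)%MS -> \rank (u + v)%MS = 2%N.
Proof.
move=> nu nv; apply/eqP; rewrite eqn_leq; apply/andP; split.
  apply: leq_trans (mxrank_adds_leqif u v) _; by rewrite !rank_rV; case: (_ != 0); case: (_ != 0).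
rewrite ltnNge; apply/negP => h.
case: (mxrank_leqif_sup (addsmxSl u v)) => le e.
have ru : \rank u = 1%N by rewrite rank_rV nu.
rewrite ru in le e.
have : (u + v <= u)%MS by rewrite -e eqn_leq le h.
by rewrite addsmx_sub (negbTE nv) andbF.
Qed.

Lemma pg_lin a b c d u v i j :
  pg (a *: u + b *: v) (c *: u + d *: v) i j = (a * d - b * c) * pg u v i j.
Proof. rewrite /pg !xcD !xcZ; ring. Qed.
Lemma Q_lin a b u v :
  Qform (a *: u + b *: v) = a ^+ 2 * Qform u + b ^+ 2 * Qform v + a * b * Bf u v.
Proof. rewrite /Qform /Bf !xcD !xcZ; ring. Qed.

Lemma span_line u v : Qform u = 0 -> Qform v = 0 -> Wcond u v -> u != 0 -> ~~ (v <= u)%MS ->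
  is_hline <<(u + v)%MS>>%MS.
Proof.
move=> Qu Qv /andP[G /eqP B] nu nv; apply/and4P; split.
- by rewrite genmx_id.
- by rewrite genmxE rank_span.
- apply/forallP => x; apply/implyP; rewrite genmxE => /dec_span[a [b ->]].
  by rewrite Q_lin Qu Qv B !mulr0 !addr0.
- apply/forallP => x; apply/forallP => y; apply/implyP; rewrite !genmxE.
  case/andP => /dec_span[a [b ->]] /dec_span[c [d ->]].
  move: G; rewrite /grass_ok !pg_lin => /and5P[/eqP-> /eqP-> /eqP-> /eqP-> /andP[/eqP-> /eqP->]].
  by rewrite !eqxx.
Qed.

Lemma hline_eq L N : is_hline L -> is_hline N -> (1 < \rank (L :&: N))%N -> L = N.
Proof.
move=> hL hN r.
have e1 : (L <= L :&: N)%MS.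
  have := mxrank_leqif_sup (capmxSl L N); case => _ <-.
  by rewrite eqn_leq mxrankS ?capmxSl // (hline_rank hL).
have e2 : (N <= L :&: N)%MS.
  have := mxrank_leqif_sup (capmxSr L N); case => _ <-.
  by rewrite eqn_leq mxrankS ?capmxSr // (hline_rank hN).
rewrite -(hline_gen hL) -(hline_gen hN); apply/genmxP; apply/andP; split.
  by apply: submx_trans e1 (capmxSr _ _).
by apply: submx_trans e2 (capmxSl _ _).
Qed.

Lemma dcount (T U : finType) (A : {set T}) (B : {set U}) (R : T -> U -> bool) :
  (\sum_(x in A) #|[set y in B | R x y]| = \sum_(y in B) #|[set x in A | R x y]|)%N.
Proof.
have E : forall (V : finType) (C : {set V}) (P : V -> bool),
    #|[set y in C | P y]| = (\sum_(y in C) (P y : nat))%N.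
  move=> V C P; rewrite -sum1_card big_mkcond [RHS]big_mkcond /=.
  by apply: eq_bigr => y _; rewrite inE; case: (y \in C); case: (P y).
transitivity (\sum_(x in A) \sum_(y in B) (R x y : nat))%N.
  by apply: eq_bigr => x _; rewrite E.
rewrite exchange_big; apply: eq_bigr => y _; by rewrite E.
Qed.

Lemma q_gt1 : (1 < q)%N.
Proof. exact: card_finNzRing_gt1. Qed.

Lemma W_span u v : Qform u = 0 -> (v <= u)%MS -> Wcond u v.
Proof.
move=> Qu /sub_rVP[a ->]; apply/andP; split.
  rewrite /grass_ok /pg !xcZ; repeat (apply/andP; split); apply/eqP; ring.
have -> : Bf u (a *: u) = 2 * a * Qform u by rewrite /Bf /Qform !xcZ; ring.
by rewrite Qu mulr0.
Qed.

Lemma lines_count u : Qform u = 0 -> u != 0 ->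
  #|[set L | is_hline L && (u <= L)%MS]| = q.+1.
Proof.
move=> Qu nu; have [cW QW] := Pall Qu nu.
set Ls := [set L | _].
set D := [set v | Wcond u v && ~~ (v <= u)%MS].
have cD : #|D| = (q ^ 3 - q)%N.
  have -> : D = [set v | Wcond u v] :\: [set v | (v <= u)%MS].
    by apply/setP => v; rewrite !inE andbC.
  rewrite cardsDS ?cW ?card_sub ?rank_rV ?nu ?expn1 //.
  by apply/subsetP => v; rewrite !inE => /(W_span Qu).
have key := dcount D Ls (fun v L => (v <= L)%MS).
have L1 : (\sum_(v in D) #|[set L in Ls | (v <= L)%MS]| = #|D|)%N.
  rewrite -sum1_card; apply: eq_bigr => v; rewrite inE => /andP[Wv nv].
  have Qv := QW v Wv.
  have sl := span_line Qu Qv Wv nu nv.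
  suff -> : [set L in Ls | (v <= L)%MS] = [set <<(u + v)%MS>>%MS] by rewrite cards1.
  apply/setP => L; rewrite !inE; apply/idP/eqP.
    case/andP => /andP[hL uL] vL; apply: hline_eq => //.
    have sub : ((u + v)%MS <= L :&: <<(u + v)%MS>>)%MS.
      by rewrite sub_capmx addsmx_sub uL vL genmxE submx_refl.
    by have := mxrankS sub; rewrite rank_span.
  move=> ->; rewrite sl !genmxE addsmxSl addsmxSr //.
have L2 : (\sum_(L in Ls) #|[set v in D | (v <= L)%MS]| = #|Ls| * (q ^ 2 - q))%N.
  rewrite -sum_nat_const; apply: eq_bigr => L; rewrite inE => /andP[hL uL].
  have -> : [set v in D | (v <= L)%MS] = [set v | (v <= L)%MS] :\: [set v | (v <= u)%MS].
    apply/setP => v; rewrite !inE; apply/idP/idP.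
      by case/andP => /andP[_ ->] ->.
    by case/andP => -> vL; rewrite (line_W hL uL vL) vL.
  rewrite cardsDS ?card_sub ?rank_rV ?nu ?(hline_rank hL) ?expn1 //.
  by apply/subsetP => v; rewrite !inE => /submx_trans; apply.
rewrite L1 L2 cD in key.
have q1 := q_gt1.
have : (#|Ls| * (q ^ 2 - q) = q.+1 * (q ^ 2 - q))%N.
  rewrite -key. rewrite !expnS expn0 !muln1. nia.
move/eqP; rewrite eqn_pmul2r; first by move/eqP.
rewrite !expnS expn0 !muln1; nia.
Qed.

Lemma cardE' (V : finType) (P : pred V) : #|[set x | P x]| = (\sum_x (P x : nat))%N.
Proof. by rewrite -sum1dep_card big_mkcond; apply: eq_bigr => x _; case: (P x). Qed.

Lemma ab_count (d : F) : (\sum_(a : F) \sum_(b : F) ((a * b)%R == d : nat) = q.-1 + q * (d == 0%R))%N.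
Proof.
rewrite (bigD1 0) //=.
have -> : (\sum_(b : F) ((0 * b)%R == d : nat) = q * (d == 0%R))%N.
  under eq_bigr => b _ do rewrite mul0r eq_sym.
  by rewrite sum_nat_const mulnC.
have -> : (\sum_(a : F | a != 0%R) \sum_(b : F) ((a * b)%R == d : nat) = q.-1)%N.
  transitivity (\sum_(a : F | a != 0%R) 1)%N.
    apply: eq_bigr => a na; rewrite (bigD1 (d / a)) //= mulrC divfK // eqxx big1 //.
    move=> b nb; apply/eqP; rewrite eqb0; apply: contra nb => /eqP <-.
    by rewrite mulrC mulKf.
  by rewrite sum1dep_card -(cardsC1 (0 : F)); apply: eq_card => x; rewrite !inE.
by rewrite addnC.
Qed.

Lemma prod_count (T : finType) (c : T -> F) :
  #|[set x : T * F * F | x.1.2 * x.2 == c x.1.1]| = (#|T| * q.-1 + q * #|[set t | c t == 0%R]|)%N.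
Proof.
rewrite [LHS]cardE'.
transitivity (\sum_(t : T) \sum_(a : F) \sum_(b : F) ((a * b)%R == c t : nat))%N.
  by rewrite pair_bigA pair_bigA.
under eq_bigr => t _ do rewrite ab_count.
rewrite big_split /= sum_nat_const; congr (_ + _)%N.
by rewrite -big_distrr /= cardE'.
Qed.

Definition c1 (x : F * F * F) : F := x.1.1 ^+ 2 - x.1.2 * x.2.
Definition c2 (y : F * F * F * F * F) : F := c1 y.1.1 - y.1.2 * y.2.

Lemma quad_count : (#|[set u : 'rV[F]_7 | Qform u == 0%R]| <= q ^ 6)%N.
Proof.
have q1 := q_gt1.
have N0 : #|[set t : F | t ^+ 2 == 0]| = 1%N.
  rewrite -(cards1 (0 : F)); apply: eq_card => t; rewrite !inE expf_eq0 //.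
have N1 : #|[set x : F * F * F | x.1.2 * x.2 == x.1.1 ^+ 2]| = (q * q)%N.
  rewrite (prod_count (fun t : F => t ^+ 2)) N0.
  case: #|F| q1 => // n _; rewrite /=; nia.
have N1' : #|[set x | c1 x == 0]| = (q * q)%N.
  by rewrite -N1; apply: eq_card => x; rewrite !inE /c1 subr_eq0 eq_sym.
have N2 : #|[set y : F * F * F * F * F | y.1.2 * y.2 == c1 y.1.1]| = (q * q * q * q)%N.
  rewrite prod_count N1' !card_prod; case: #|F| q1 => // n _; rewrite /=; nia.
have N2' : #|[set y | c2 y == 0]| = (q * q * q * q)%N.
  by rewrite -N2; apply: eq_card => x; rewrite !inE /c2 subr_eq0 eq_sym.
have N3 : #|[set z : F * F * F * F * F * F * F | z.1.2 * z.2 == c2 z.1.1]| = (q ^ 6)%N.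
  rewrite prod_count N2' !card_prod; case: #|F| q1 => // n _; rewrite /= !expnS expn0; nia.
rewrite -N3.
pose h (u : 'rV[F]_7) : F * F * F * F * F * F * F :=
  (xc u 3, xc u 2, xc u 6, xc u 1, xc u 5, xc u 0, xc u 4).
have hi : injective h.
  move=> u v [e3 e2 e6 e1 e5 e0 e4]; apply: xc_ext => -[|[|[|[|[|[|[|i]]]]]]] //.
rewrite -(card_imset _ hi); apply: subset_leq_card; apply/subsetP => z /imsetP[u].
rewrite !inE => Qu -> /=; rewrite /c2 /c1 /=; move: Qu; rewrite /Qform.
rewrite -subr_eq0 => /eqP H; rewrite -subr_eq0; apply/eqP; rewrite -H; ring.
Qed.

Lemma card_sum (V : finType) (C : {set V}) (P : V -> bool) :
    #|[set y in C | P y]| = (\sum_(y in C) (P y : nat))%N.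
Proof.
rewrite -sum1_card big_mkcond [RHS]big_mkcond /=.
by apply: eq_bigr => y _; rewrite inE; case: (y \in C); case: (P y).
Qed.

Lemma card_nz m (A : 'M[F]_(m, 7)) :
  #|[set v : 'rV[F]_7 | (v != 0) && (v <= A)%MS]| = (q ^ \rank A).-1.
Proof.
rewrite -card_sub [in RHS](cardsD1 0) inE sub0mx /=; apply: eq_card => v.
by rewrite !inE.
Qed.

Lemma hl_count : (#|[set L : 'M[F]_7 | is_hline L]| <= (q ^ 3 + 1) * (q ^ 2 + q + 1))%N.
Proof.
have q1 := q_gt1.
set B := [set L | is_hline L].
set A := [set u : 'rV[F]_7 | (u != 0) && (Qform u == 0%R)].
have key := dcount A B (fun u L => (u <= L)%MS).
have L1 : (\sum_(u in A) #|[set L in B | (u <= L)%MS]| = #|A| * q.+1)%N.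
  rewrite -sum_nat_const; apply: eq_bigr => u; rewrite inE => /andP[nu /eqP Qu].
  rewrite -(lines_count Qu nu); apply: eq_card => L; by rewrite !inE.
have L2 : (\sum_(L in B) #|[set u in A | (u <= L)%MS]| = #|B| * (q ^ 2).-1)%N.
  rewrite -sum_nat_const; apply: eq_bigr => L; rewrite inE => hL.
  have := card_nz L; rewrite (hline_rank hL) => <-; apply: eq_card => u; rewrite !inE.
  apply/idP/idP; first by case/andP => /andP[-> _] ->.
  by case/andP => -> uL; rewrite (hline_Q hL uL) eqxx uL.
have cA : (#|A| <= (q ^ 6).-1)%N.
  have Q0 : Qform (0 : 'rV[F]_7) = 0 by rewrite /Qform /xc !mxE; ring.
  have := quad_count; rewrite (cardsD1 0) inE Q0 eqxx /= => h.
  have -> : #|A| = #|[set u : 'rV[F]_7 | Qform u == 0%R] :\ 0|.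
    by apply: eq_card => u; rewrite !inE.
  by rewrite -ltnS prednK // expn_gt0 (ltnW q1).
rewrite L1 L2 in key.
have arA : ((q ^ 6).-1 * q.+1 = (q ^ 3 + 1) * (q ^ 2 + q + 1) * (q ^ 2).-1)%N.
  rewrite !expnS expn0 !muln1; case: #|F| => [|m] //; rewrite -!subn1; nia.
have h : (#|B| * (q ^ 2).-1 <= (q ^ 3 + 1) * (q ^ 2 + q + 1) * (q ^ 2).-1)%N.
  by rewrite -key -arA; apply: leq_mul cA (leqnn q.+1).
have p : (0 < (q ^ 2).-1)%N by rewrite expnS expn1 -subn1; nia.
by rewrite leq_pmul2r in h.
Qed.

Lemma meets_self M : is_hline M -> meets M M.
Proof.
move=> hM; move/capmx_idPl: (submx_refl M) => e.
by rewrite /meets -mxrank_eq0 e (hline_rank hM).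
Qed.

Lemma meet_count M : is_hline M ->
  (q ^ 2 + q + 1 <= #|[set N | is_hline N && meets M N]|)%N.
Proof.
move=> hM; have q1 := q_gt1.
set A := [set u : 'rV[F]_7 | (u != 0) && (u <= M)%MS].
set B := [set N | is_hline N && (N != M)].
set C := [set N in B | meets M N].
have key := dcount A B (fun u N => (u <= N)%MS).
have L1 : (\sum_(u in A) #|[set N in B | (u <= N)%MS]| = #|A| * q)%N.
  rewrite -sum_nat_const; apply: eq_bigr => u; rewrite inE => /andP[nu uM].
  have Qu := hline_Q hM uM.
  have := lines_count Qu nu; rewrite (cardsD1 M) inE hM uM /= => -[<-].
  by apply: eq_card => N; rewrite !inE; case: (N == M); case: (is_hline N); case: (u <= N)%MS.
have cA : #|A| = (q ^ 2).-1 by have := card_nz M; rewrite (hline_rank hM).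
have L2 : (\sum_(N in B) #|[set u in A | (u <= N)%MS]| <= #|C| * q.-1)%N.
  rewrite card_sum big_distrl /=; apply: leq_sum => N; rewrite inE => /andP[hN nNM].
  have r1 : (\rank (M :&: N) <= 1)%N.
    rewrite leqNgt; apply/negP => r2; move/negP: nNM; apply; apply/eqP.
    by symmetry; apply: hline_eq.
  apply: (@leq_trans #|[set v : 'rV[F]_7 | (v != 0) && (v <= M :&: N)%MS]|).
    apply: subset_leq_card; apply/subsetP => u; rewrite !inE sub_capmx.
    by case/andP => /andP[-> ->] ->.
  rewrite card_nz /meets -mxrank_eq0.
  move: r1; case: (\rank (M :&: N)) => [|[|]] //= _; by rewrite expn1 mul1n.
rewrite L1 cA in key.
have hC : (q.+1 * q <= #|C|)%N.
  have p : (0 < q.-1)%N by rewrite -subn1; nia.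
  rewrite -(leq_pmul2r p) (leq_trans _ L2) // -key.
  rewrite expnS expn1 -!subn1; nia.
rewrite (cardsD1 M) inE hM meets_self //= add1n.
have -> : [set N | is_hline N && meets M N] :\ M = C.
  by apply/setP => N; rewrite !inE; case: (N == M); case: (is_hline N).
move: hC; rewrite expnS expn1 mulSn; move: #|C| #|F| => c n; lia.
Qed.

Lemma within2 M1 N M2 : is_hline N -> is_hline M2 -> meets M1 N -> meets N M2 ->
  lines_within 2 M1 M2.
Proof.
move=> hN hM2 a b /=; apply/orP; right; apply/existsP; exists N; rewrite hN a /=.
by apply/orP; right; apply/existsP; exists M2; rewrite hM2 b eqxx.
Qed.
End S2.

Unset Implicit Arguments.
Theorem mainTheorem5 (F : finFieldType) (S : {set 'M[F]_7}) :
  (forall L, L \in S -> is_hline L) ->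
  #|S| = (#|F| ^ 3).+1 ->
  (forall L M, L \in S -> M \in S -> L != M -> opposite L M) ->
  forall L : 'M[F]_7, is_hline L -> exists2 M, M \in S & meets L M.
Proof.
move=> hS cS opp L0 hL0.
case: (boolP [exists M in S, meets L0 M]) => [/existsP[M /andP[MS mL]] | none].
  by exists M.
exfalso.
have nm : forall M, M \in S -> ~~ meets M L0.
  move=> M MS; apply/negP => m; move/negP: none; apply; apply/existsP; exists M.
  by rewrite MS /meets capmxC.
set B := [set N : 'M[F]_7 | is_hline N].
have key := dcount S B (fun M N => meets M N).
have L1 : (#|S| * (#|F| ^ 2 + #|F| + 1) <= \sum_(M in S) #|[set N in B | meets M N]|)%N.
  rewrite -sum_nat_const; apply: leq_sum => M MS.
  apply: leq_trans (meet_count (hS M MS)) _; apply: subset_leq_card.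
  by apply/subsetP => N; rewrite !inE.
have L2 : (\sum_(N in B) #|[set M in S | meets M N]| <= #|B| - 1)%N.
  apply: (@leq_trans (\sum_(N in B) (N != L0 : nat))%N).
    apply: leq_sum => N; rewrite inE => hN; case: (eqVneq N L0) => [-> | ne] /=.
      rewrite leqn0; apply/eqP; apply: eq_card0 => M; rewrite !inE.
      by case MS : (M \in S) => //=; apply: negbTE; apply: nm.
    rewrite leqNgt; apply/negP => /card_gt1P[M1 [M2 [M1i M2i ne12]]].
    rewrite !inE in M1i M2i; case/andP: M1i => M1S m1; case/andP: M2i => M2S m2.
    have := opp M1 M2 M1S M2S ne12; rewrite /opposite => /andP[_ /negP]; apply.
    by apply: (within2 hN (hS M2 M2S)) => //; rewrite /meets capmxC.
  rewrite -card_sum (cardsD1 L0 B) inE hL0 /= add1n subn1 /=.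
  by apply: eq_leq; apply: eq_card => N; rewrite !inE andbC.
rewrite key in L1.
have hB := hl_count F.
move: (leq_trans L1 L2) hB; rewrite cS.
move: #|B| #|F| => b n; nia.
Qed.
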